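(* Let $S$ be any set with $\bot \notin S$, and let $\mathcal{P}_\star(S) = \{ X \subseteq S \cup \{\bot\} \mid X \text{ infinite} \Rightarrow \bot \in X \}$. Define a relation $\sqsubseteq$ on $\mathcal{P}_\star(S)$ by $$X \sqsubseteq Y \iff X = Y \ \lor\ \big(\bot \in X \land (Y = \emptyset \lor X \setminus \{\bot\} \subseteq Y)\big).$$ Then $(\mathcal{P}_\star(S), \sqsubseteq)$ is an $\omega$-complete partial order with a least element (i.e., $\sqsubseteq$ is a partial order, there is a least element, and every increasing sequence $X_0 \sqsubseteq X_1 \sqsubseteq X_2 \sqsubseteq \cdots$ has a supremum).
   Context: $\bot$ is a fresh symbol representing non-termination. An element $X \in \mathcal{P}_\star(S)$ represents the set of outcomes of a nondeterministic computation: $X=\emptyset$ is the error value, $\bot\in X$ means some branch diverges, and the other elements of $X$ are returned values. *)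

(* Defs.v *)
(* S ∪ {⊥} is modelled as [option S] with [None] = ⊥
   (so ⊥ ∉ S automatically); subsets are predicates [option S -> Prop],
   compared with Leibniz equality (extensionality axioms are whitelisted). *)
From Stdlib Require Import List.

Definition oset (S : Type) := option S -> Prop.

Definition is_finite {S : Type} (X : oset S) : Prop :=
  exists l : list (option S), forall x, X x -> In x l.

Definition Pstar {S : Type} (X : oset S) : Prop :=
  ~ is_finite X -> X None.

Definition sqle {S : Type} (X Y : oset S) : Prop :=
  X = Y \/
  (X None /\ ((forall y, ~ Y y) \/ (forall x, X x -> x <> None -> Y x))).

(* Main.v *)
Require Import Defs.
From Stdlib Require Import Arith List Classical FunctionalExtensionality PropExtensionality Lia.

Lemma sqle_trans {T} (X Y Z : oset T) : sqle X Y -> sqle Y Z -> sqle X Z.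
Proof.
  unfold sqle; intros [->|[HX HXY]] HYZ; [exact HYZ|].
  destruct HYZ as [<-|[HY [HZ|HYZ]]]; [right; auto| right; auto|].
  right; split; auto.
  destruct HXY as [HY0|HXY]; [exfalso; exact (HY0 None HY)|].
  right; intros x Hx Hn; apply HYZ; auto.
Qed.

Lemma stab {T} (c : nat -> oset T) N :
  (forall n, sqle (c n) (c (S n))) -> ~ c N None -> forall k, c (k + N) = c N.
Proof.
  intros Hc HN k; induction k; [reflexivity|].
  simpl. destruct (Hc (k + N)) as [E|[H _]]; [congruence|].
  rewrite IHk in H; contradiction.
Qed.

Lemma chain_le {T} (c : nat -> oset T) :
  (forall n, sqle (c n) (c (S n))) -> forall n k, sqle (c n) (c (k + n)).
Proof.
  intros Hc n k; induction k; [left; reflexivity|].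
  eapply sqle_trans; [exact IHk| exact (Hc (k+n))].
Qed.

Theorem proposition4p1 (T : Type) :
  (* reflexivity *)
  (forall X : oset T, Pstar X -> sqle X X) /\
  (* antisymmetry *)
  (forall X Y : oset T, Pstar X -> Pstar Y -> sqle X Y -> sqle Y X -> X = Y) /\
  (* transitivity *)
  (forall X Y Z : oset T, Pstar X -> Pstar Y -> Pstar Z ->
     sqle X Y -> sqle Y Z -> sqle X Z) /\
  (* least element *)
  (exists B : oset T, Pstar B /\ forall X, Pstar X -> sqle B X) /\
  (* every increasing sequence has a supremum *)
  (forall c : nat -> oset T,
     (forall n, Pstar (c n)) -> (forall n, sqle (c n) (c (S n))) ->
     exists L : oset T, Pstar L /\ (forall n, sqle (c n) L) /\
       (forall U, Pstar U -> (forall n, sqle (c n) U) -> sqle L U)).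
Proof.
  split; [intros; left; reflexivity|].
  split.
  { intros X Y _ _ [E|[HX HXY]] [E'|[HY HYX]]; auto.
    destruct HXY as [H|HXY]; [exfalso; exact (H None HY)|].
    destruct HYX as [H|HYX]; [exfalso; exact (H None HX)|].
    apply functional_extensionality; intro x; apply propositional_extensionality.
    destruct x as [s|]; split; intro H; auto; [apply HXY|apply HYX]; auto; discriminate. }
  split; [intros X Y Z _ _ _; apply sqle_trans|].
  split.
  { exists (fun x => x = None); split.
    - intros _; reflexivity.
    - intros X _; right; split; [reflexivity|right]; intros x Hx Hn; contradiction. }
  intros c Hp Hc.
  destruct (classic (exists N, ~ c N None)) as [[N HN]|Hall].
  - exists (c N); split; [apply Hp|split].
    + intro n. destruct (Nat.le_gt_cases n N) as [Hle|Hgt].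
      * replace N with ((N - n) + n) by lia. apply chain_le; auto.
      * replace n with ((n - N) + N) by lia. rewrite (stab c N Hc HN). left; reflexivity.
    + intros U _ HU; apply HU.
  - assert (Hb : forall n, c n None) by (intro n; apply NNPP; intro H; apply Hall; eauto).
    exists (fun x => exists n, c n x). split; [intros _; exists 0; apply Hb|split].
    + intro n; right; split; [apply Hb|right]; intros x Hx _; eauto.
    + intros U _ HU. right; split; [exists 0; apply Hb|].
      destruct (classic (forall y, ~ U y)) as [H|H]; [left; exact H|right].
      intros x [n Hx] Hn. destruct (HU n) as [<-|[_ [H'|H']]]; auto.
      exfalso; apply H; exact H'.
Qed.
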